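(* On bipartite graphs, each of GVC, GVC1 and GVC2 is equivalent to the bipartite unconstrained 0-1 quadratic programming problem BQP01: every instance of one can be formulated as an instance of the other such that an optimal solution of the new instance yields an optimal solution of the original (identifying $U_1\subseteq V_1$, $U_2\subseteq V_2$ with incidence vectors $x\in\{0,1\}^m$, $y\in\{0,1\}^n$).
   Context: Let $G=(V_1,V_2,E)$ be a bipartite graph with $V_1=\{1,\dots,m\}$, $V_2=\{1,\dots,n\}$ and every edge $(i,j)$ having $i\in V_1$, $j\in V_2$. Vertices $i\in V_1$ have weights $c_i$, vertices $j\in V_2$ have weights $d_j$, and each edge has real weights $q^0_{ij},q^1_{ij},q^2_{ij}$. For $U_1\subseteq V_1$, $U_2\subseteq V_2$ let $E_0(U_1,U_2)=\{(i,j)\in E: i\notin U_1, j\notin U_2\}$, $E_1(U_1,U_2)$ the edges with exactly one of $i\in U_1$, $j\in U_2$, and $E_2(U_1,U_2)=\{(i,j)\in E: i\in U_1,j\in U_2\}$. GVC on $G$ minimizes $\sum_{i\in U_1}c_i+\sum_{j\in U_2}d_j+\sum_{E_0}q^0_{ij}+\sum_{E_1}q^1_{ij}+\sum_{E_2}q^2_{ij}$ over $U_1\subseteq V_1,U_2\subseteq V_2$; GVC1 is the special case $q^1\equiv q^2\equiv 0$; GVC2 is the special case $q^0\equiv q^1\equiv 0$. BQP01: given a real $m\times n$ matrix $Q=(q_{ij})$, $a\in\mathbb{R}^m$, $b\in\mathbb{R}^n$, minimize $\sum_i a_ix_i+\sum_j b_jy_j+\sum_{i,j}q_{ij}x_iy_j$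 over $x\in\{0,1\}^m$, $y\in\{0,1\}^n$. Two problems are equivalent if each can be formulated as the other so that an optimal solution of the formulated instance gives an optimal solution of the original. *)

(* Defs.v *)
From mathcomp Require Import all_boot all_order all_algebra.
Set Implicit Arguments. Unset Strict Implicit. Unset Printing Implicit Defensive.
Import Order.TTheory GRing.Theory Num.Theory.
Local Open Scope ring_scope.

(* Bipartite graph G = (V1, V2, E): V1 = 'I_m, V2 = 'I_n (i.e. {1..m}, {1..n}
   shifted to {0..m-1}, {0..n-1}), and E a set of pairs (i,j), i in V1, j in V2. *)

Section Defs.
Variables (R : realFieldType) (m n : nat).

Definition gvc_obj (E : {set 'I_m * 'I_n}) (c : 'I_m -> R) (d : 'I_n -> R)
  (q0 q1 q2 : 'I_m -> 'I_n -> R) (U1 : {set 'I_m}) (U2 : {set 'I_n}) : R :=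
  \sum_(i in U1) c i + \sum_(j in U2) d j
  + \sum_(e in E | (e.1 \notin U1) && (e.2 \notin U2)) q0 e.1 e.2
  + \sum_(e in E | (e.1 \in U1) (+) (e.2 \in U2)) q1 e.1 e.2
  + \sum_(e in E | (e.1 \in U1) && (e.2 \in U2)) q2 e.1 e.2.

Definition gvc_opt E c d q0 q1 q2 (U1 : {set 'I_m}) (U2 : {set 'I_n}) : Prop :=
  forall (V1 : {set 'I_m}) (V2 : {set 'I_n}),
    gvc_obj E c d q0 q1 q2 U1 U2 <= gvc_obj E c d q0 q1 q2 V1 V2.

Definition bqp_obj (Q : 'M[R]_(m, n)) (a : 'I_m -> R) (b : 'I_n -> R)
  (x : 'I_m -> bool) (y : 'I_n -> bool) : R :=
  \sum_i a i * (x i)%:R + \sum_j b j * (y j)%:R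
  + \sum_i \sum_j Q i j * (x i)%:R * (y j)%:R.

Definition bqp_opt Q a b (x : 'I_m -> bool) (y : 'I_n -> bool) : Prop :=
  forall (x' : 'I_m -> bool) (y' : 'I_n -> bool),
    bqp_obj Q a b x y <= bqp_obj Q a b x' y'.

End Defs.

Definition incid (k : nat) (U : {set 'I_k}) : 'I_k -> bool := fun i => i \in U.

Variant gvc_kind := GVC | GVC1 | GVC2.

Definition in_class (R : realFieldType) (m n : nat) (k : gvc_kind)
  (q0 q1 q2 : 'I_m -> 'I_n -> R) : Prop :=
  match k with
  | GVC => True
  | GVC1 => forall i j, q1 i j = 0 /\ q2 i j = 0
  | GVC2 => forall i j, q0 i j = 0 /\ q1 i j = 0
  end.

Definition gvc_formulated_as_bqp (R : realFieldType) (k : gvc_kind) : Prop :=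
  forall (m n : nat) (E : {set 'I_m * 'I_n}) (c : 'I_m -> R) (d : 'I_n -> R)
         (q0 q1 q2 : 'I_m -> 'I_n -> R),
  in_class k q0 q1 q2 ->
  exists (Q : 'M[R]_(m, n)) (a : 'I_m -> R) (b : 'I_n -> R) (K : R),
    (forall U1 U2, bqp_obj Q a b (incid U1) (incid U2)
                   = gvc_obj E c d q0 q1 q2 U1 U2 + K) /\
    (forall U1 U2, bqp_opt Q a b (incid U1) (incid U2) ->
                   gvc_opt E c d q0 q1 q2 U1 U2).

Definition bqp_formulated_as_gvc (R : realFieldType) (k : gvc_kind) : Prop :=
  forall (m n : nat) (Q : 'M[R]_(m, n)) (a : 'I_m -> R) (b : 'I_n -> R),
  exists (E : {set 'I_m * 'I_n}) (c : 'I_m -> R) (d : 'I_n -> R)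
         (q0 q1 q2 : 'I_m -> 'I_n -> R) (K : R),
    in_class k q0 q1 q2 /\
    (forall U1 U2, gvc_obj E c d q0 q1 q2 U1 U2
                   = bqp_obj Q a b (incid U1) (incid U2) + K) /\
    (forall U1 U2, gvc_opt E c d q0 q1 q2 U1 U2 ->
                   bqp_opt Q a b (incid U1) (incid U2)).

Definition equivalent_to_bqp (R : realFieldType) (k : gvc_kind) : Prop :=
  gvc_formulated_as_bqp R k /\ bqp_formulated_as_gvc R k.

(* Main.v *)
Require Import Defs.
From mathcomp Require Import all_boot all_order all_algebra ring lra.
Set Implicit Arguments. Unset Strict Implicit. Unset Printing Implicit Defensive.
Import Order.TTheory GRing.Theory Num.Theory.
Local Open Scope ring_scope.

Lemma sum_set (R : realFieldType) (T: finType) (A : {set T}) (F : T -> R) :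
  \sum_(i in A) F i = \sum_i F i * (i \in A)%:R.
Proof. rewrite big_mkcond; apply eq_bigr => i _; by case: (i \in A) => /=; rewrite ?mulr1n ?mulr0n ?mulr1 ?mulr0. Qed.

Lemma sum_cond (R : realFieldType) (T: finType) (A : {set T}) (P : pred T) (F : T -> R) :
  \sum_(i in A | P i) F i = \sum_(i in A) F i * (P i)%:R.
Proof. rewrite big_mkcondr; apply eq_bigr => i _; by case: (P i) => /=; rewrite ?mulr1n ?mulr0n ?mulr1 ?mulr0. Qed.

Lemma gvc_expand (R : realFieldType) m n (E : {set 'I_m * 'I_n}) c d
  (q0 q1 q2 : 'I_m -> 'I_n -> R) U1 U2 :
  gvc_obj E c d q0 q1 q2 U1 U2 =
  \sum_i c i * (i \in U1)%:R + \sum_j d j * (j \in U2)%:R +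
  \sum_(p : 'I_m * 'I_n) (p \in E)%:R *
     (q0 p.1 p.2 * (~~ (p.1 \in U1))%:R * (~~ (p.2 \in U2))%:R
      + q1 p.1 p.2 * ((p.1 \in U1) (+) (p.2 \in U2))%:R
      + q2 p.1 p.2 * (p.1 \in U1)%:R * (p.2 \in U2)%:R).
Proof.
rewrite /gvc_obj !sum_cond !(sum_set U1) !(sum_set U2) !(sum_set E).
rewrite -!addrA; congr (_ + (_ + _)); rewrite -!big_split /=.
apply eq_bigr => p _.
case: (p.1 \in U1); case: (p.2 \in U2); case: (p \in E); rewrite /=; ring.
Qed.

Lemma bqp_expand (R : realFieldType) m n (Q : 'M[R]_(m, n)) a b x y :
  bqp_obj Q a b x y = \sum_i a i * (x i)%:R + \sum_j b j * (y j)%:R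
   + \sum_(p : 'I_m * 'I_n) Q p.1 p.2 * (x p.1)%:R * (y p.2)%:R.
Proof. by rewrite /bqp_obj pair_big. Qed.

Lemma bqp_ext (R : realFieldType) m n (Q : 'M[R]_(m, n)) a b x y x' y' :
  x =1 x' -> y =1 y' -> bqp_obj Q a b x y = bqp_obj Q a b x' y'.
Proof.
move=> hx hy; rewrite /bqp_obj.
congr (_ + _ + _).
- by apply eq_bigr => i _; rewrite hx.
- by apply eq_bigr => i _; rewrite hy.
- by apply eq_bigr => i _; apply eq_bigr => j _; rewrite hx hy.
Qed.

Lemma opt1 (R : realFieldType) m n (E : {set 'I_m * 'I_n}) c d q0 q1 q2
  (Q : 'M[R]_(m, n)) a b K :
  (forall U1 U2, bqp_obj Q a b (incid U1) (incid U2) = gvc_obj E c d q0 q1 q2 U1 U2 + K) ->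
  forall U1 U2, bqp_opt Q a b (incid U1) (incid U2) -> gvc_opt E c d q0 q1 q2 U1 U2.
Proof.
move=> h U1 U2 ho V1 V2; have := ho (incid V1) (incid V2).
rewrite !h; lra.
Qed.

Lemma opt2 (R : realFieldType) m n (E : {set 'I_m * 'I_n}) c d q0 q1 q2
  (Q : 'M[R]_(m, n)) a b K :
  (forall U1 U2, gvc_obj E c d q0 q1 q2 U1 U2 = bqp_obj Q a b (incid U1) (incid U2) + K) ->
  forall U1 U2, gvc_opt E c d q0 q1 q2 U1 U2 -> bqp_opt Q a b (incid U1) (incid U2).
Proof.
move=> h U1 U2 ho x y; have := ho [set i | x i] [set j | y j].
rewrite !h (@bqp_ext _ _ _ Q a b (incid [set i | x i]) (incid [set j | y j]) x y).
- lra.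
- by move=> i; rewrite /incid inE.
- by move=> i; rewrite /incid inE.
Qed.

Lemma L1 (R : realFieldType) m n (F : 'I_m -> 'I_n -> R) (G : 'I_m -> R) :
  \sum_i (\sum_j F i j) * G i = \sum_(p : 'I_m * 'I_n) F p.1 p.2 * G p.1.
Proof. rewrite -(pair_bigA _ (fun i j => F i j * G i)) /=; apply eq_bigr => i _; by rewrite mulr_suml. Qed.

Lemma L2 (R : realFieldType) m n (F : 'I_m -> 'I_n -> R) (H : 'I_n -> R) :
  \sum_j (\sum_i F i j) * H j = \sum_(p : 'I_m * 'I_n) F p.1 p.2 * H p.2.
Proof.
rewrite -(pair_bigA _ (fun i j => F i j * H j)) /= exchange_big /=; apply eq_bigr => j _; by rewrite mulr_suml.
Qed.

Lemma gvc2bqp (R : realFieldType) k : gvc_formulated_as_bqp R k.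
Proof.
move=> m n E c d q0 q1 q2 _.
pose Q := \matrix_(i, j) (((i, j) \in E)%:R * (q0 i j - 2 * q1 i j + q2 i j)) : 'M[R]_(m, n).
pose a := fun i => c i + \sum_j ((i, j) \in E)%:R * (q1 i j - q0 i j).
pose b := fun j => d j + \sum_i ((i, j) \in E)%:R * (q1 i j - q0 i j).
have hK : forall U1 U2, bqp_obj Q a b (incid U1) (incid U2) =
   gvc_obj E c d q0 q1 q2 U1 U2 - \sum_(p : 'I_m * 'I_n) (p \in E)%:R * q0 p.1 p.2.
  move=> U1 U2; rewrite bqp_expand gvc_expand /a /b.
  under eq_bigr do rewrite mulrDl.
  under [X in _ + X + _]eq_bigr do rewrite mulrDl.
  rewrite !big_split /= L1 L2 -[RHS]addrA -sumrN -big_split /= -!addrA.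
  congr (_ + _); rewrite addrCA; congr (_ + _).
  rewrite -!big_split /=; apply eq_bigr => p _; rewrite /incid mxE -surjective_pairing.
  case: (p.1 \in U1); case: (p.2 \in U2); case: (p \in E); rewrite /=; ring.
exists Q, a, b, (- \sum_(p : 'I_m * 'I_n) (p \in E)%:R * q0 p.1 p.2).
split; first by [].
exact: opt1 hK.
Qed.

Lemma bqp2gvc2 (R : realFieldType) k : k <> GVC1 -> bqp_formulated_as_gvc R k.
Proof.
move=> hk m n Q a b.
have hK : forall U1 U2, gvc_obj [set: 'I_m * 'I_n] a b (fun _ _ => 0) (fun _ _ => 0)
    (fun i j => Q i j) U1 U2 = bqp_obj Q a b (incid U1) (incid U2) + 0.
  move=> U1 U2; rewrite gvc_expand bqp_expand addr0; congr (_ + _).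
  apply eq_bigr => p _; rewrite in_setT /incid.
  case: (p.1 \in U1); case: (p.2 \in U2); rewrite /=; ring.
exists [set: 'I_m * 'I_n], a, b, (fun _ _ => 0), (fun _ _ => 0), (fun i j => Q i j), 0.
split; last by split; [exact: hK | exact: opt2 hK].
by case: k hk => //= _ i j.
Qed.

Lemma bqp2gvc1 (R : realFieldType) : bqp_formulated_as_gvc R GVC1.
Proof.
move=> m n Q a b.
pose c := fun i => a i + \sum_j Q i j.
pose d := fun j => b j + \sum_i Q i j.
have hK : forall U1 U2, gvc_obj [set: 'I_m * 'I_n] c d (fun i j => Q i j) (fun _ _ => 0)
    (fun _ _ => 0) U1 U2 = bqp_obj Q a b (incid U1) (incid U2) + \sum_(p : 'I_m * 'I_n) Q p.1 p.2.
  move=> U1 U2; rewrite gvc_expand bqp_expand /c /d.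
  under eq_bigr do rewrite mulrDl.
  under [X in _ + X + _]eq_bigr do rewrite mulrDl.
  rewrite !big_split /= L1 L2 -!addrA.
  congr (_ + _); rewrite addrCA; congr (_ + _).
  rewrite -!big_split /=; apply eq_bigr => p _; rewrite in_setT /incid.
  case: (p.1 \in U1); case: (p.2 \in U2); rewrite /=; ring.
exists [set: 'I_m * 'I_n], c, d, (fun i j => Q i j), (fun _ _ => 0), (fun _ _ => 0),
  (\sum_(p : 'I_m * 'I_n) Q p.1 p.2).
split; first by move=> i j.
by split; [exact: hK | exact: opt2 hK].
Qed.

Theorem theorem4 (R : realFieldType) :
  equivalent_to_bqp R GVC /\ equivalent_to_bqp R GVC1 /\ equivalent_to_bqp R GVC2.
Proof.
split; [|split]; split; try exact: gvc2bqp.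
- exact: bqp2gvc2.
- exact: bqp2gvc1.
- exact: bqp2gvc2.
Qed.
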